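(* Let $(M,d)$ be a complete pointed metric space and $f\in\mathrm{Lip}_0(M,M)$ such that $\mathrm{int}(R_{\widehat f})\neq\emptyset$, and assume there is $C>0$ with $\mathrm{Lip}(f^n)\le C$ for all $n\in\mathbb N$. Then $R_{\widehat f}=\mathcal F(M)$. Moreover, if $M$ is separable, then $\widehat f$ is a rigid operator.
   Context: A pointed metric space is a metric space with a distinguished point $0$. $\mathrm{Lip}_0(M,M)$ denotes the Lipschitz maps $f:M\to M$ with $f(0)=0$, $\mathrm{Lip}(f)$ the least Lipschitz constant; $\mathrm{Lip}_0(M)$ the real-valued Lipschitz functions vanishing at $0$ normed by $\mathrm{Lip}$. $\delta:M\to\mathrm{Lip}_0(M)^*$, $\delta(x)(\varphi)=\varphi(x)$; $\mathcal F(M)$ is the norm-closed linear span of $\delta(M)$. $\widehat f$ is the unique bounded linear operator on $\mathcal F(M)$ with $\widehat f(\delta(x))=\delta(f(x))$. For an operator $T$, $R_T=\{\mu:\liminf_{n}\|T^n\mu-\mu\|=0\}$. A bounded linear operator $T$ on a Banach space $X$ is rigid if there is an increasing sequence $(n(j))_j\subset\mathbb N$ with $T^{n(j)}x\to x$ for every $x\in X$. *)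

(* Defs.v *)
From Stdlib Require Import Reals List.
Open Scope R_scope.

Definition is_metric {M : Type} (d : M -> M -> R) : Prop :=
  (forall x y, 0 <= d x y) /\
  (forall x y, d x y = 0 <-> x = y) /\
  (forall x y, d x y = d y x) /\
  (forall x y z, d x z <= d x y + d y z).

Definition cauchy_seq {M : Type} (d : M -> M -> R) (u : nat -> M) : Prop :=
  forall eps, 0 < eps -> exists N, forall n m, (N <= n)%nat -> (N <= m)%nat ->
    d (u n) (u m) < eps.

Definition seq_converges {M : Type} (d : M -> M -> R) (u : nat -> M) (x : M) : Prop :=
  forall eps, 0 < eps -> exists N, forall n, (N <= n)%nat -> d (u n) x < eps.

Definition complete_metric {M : Type} (d : M -> M -> R) : Prop :=
  forall u, cauchy_seq d u -> exists x, seq_converges d u x.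

(* a (pointed, hence nonempty) metric space is separable iff it has a
   dense sequence *)
Definition separable_metric {M : Type} (d : M -> M -> R) : Prop :=
  exists s : nat -> M, forall x eps, 0 < eps -> exists n, d x (s n) < eps.

Definition lipschitz_map {M : Type} (d : M -> M -> R) (L : R) (g : M -> M) : Prop :=
  forall x y, d (g x) (g y) <= L * d x y.

Definition lip0_fun {M : Type} (d : M -> M -> R) (x0 : M) (L : R) (phi : M -> R) : Prop :=
  phi x0 = 0 /\ forall x y, Rabs (phi x - phi y) <= L * d x y.

(* An element of Lip_0(M)^* is represented by its action on functions
   M -> R; only its values on Lip_0(M) are ever used. *)
Definition functional (M : Type) := (M -> R) -> R.

(* dual norm:  || mu - nu ||_{Lip_0(M)^*} <= r *)
Definition fdist_le {M : Type} (d : M -> M -> R) (x0 : M)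
  (mu nu : functional M) (r : R) : Prop :=
  forall (L : R) (phi : M -> R), 0 <= L -> lip0_fun d x0 L phi ->
    Rabs (mu phi - nu phi) <= r * L.

(* || mu - nu || < r  (the sup is attained as a bound) *)
Definition fdist_lt {M : Type} (d : M -> M -> R) (x0 : M)
  (mu nu : functional M) (r : R) : Prop :=
  exists r', r' < r /\ fdist_le d x0 mu nu r'.

(* finite linear combination  sum_i a_i delta(x_i) *)
Definition molecule {M : Type} (l : list (R * M)) : functional M :=
  fun phi => fold_right (fun p acc => fst p * phi (snd p) + acc) 0 l.

(* mu belongs to F(M) = norm-closed linear span of delta(M) *)
Definition in_FM {M : Type} (d : M -> M -> R) (x0 : M) (mu : functional M) : Prop :=
  forall eps, 0 < eps -> exists l : list (R * M), fdist_le d x0 mu (molecule l) eps.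

(* (\hat f)^n mu : phi |-> mu (phi o f^n)  (restriction of the adjoint of
   the composition operator, which agrees with \hat f^n on F(M)) *)
Definition hatf_iter {M : Type} (f : M -> M) (n : nat) (mu : functional M) : functional M :=
  fun phi => mu (fun x => phi (Nat.iter n f x)).

(* R_{\hat f} = { mu in F(M) : liminf_n || \hat f^n mu - mu || = 0 } *)
Definition in_R_hatf {M : Type} (d : M -> M -> R) (x0 : M) (f : M -> M)
  (mu : functional M) : Prop :=
  in_FM d x0 mu /\
  forall eps, 0 < eps -> forall N, exists n, (N <= n)%nat /\
    fdist_le d x0 (hatf_iter f n mu) mu eps.

(* int(R_{\hat f}) <> empty, interior taken in F(M) *)
Definition R_hatf_interior_nonempty {M : Type} (d : M -> M -> R) (x0 : M)
  (f : M -> M) : Prop :=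
  exists mu0, in_FM d x0 mu0 /\ exists r, 0 < r /\
    forall nu, in_FM d x0 nu -> fdist_lt d x0 nu mu0 r -> in_R_hatf d x0 f nu.

Definition hatf_rigid {M : Type} (d : M -> M -> R) (x0 : M) (f : M -> M) : Prop :=
  exists nj : nat -> nat, (forall j, (nj j < nj (S j))%nat) /\
    forall mu, in_FM d x0 mu ->
      forall eps, 0 < eps -> exists J, forall j, (J <= j)%nat ->
        fdist_le d x0 (hatf_iter f (nj j) mu) mu eps.

(* Main.v *)
Require Import Defs.
From Stdlib Require Import Reals List Lra Lia ClassicalEpsilon Classical.
Open Scope R_scope.

Definition eqdec {M : Type} (x y : M) : {x = y} + {x <> y} :=
  excluded_middle_informative (x = y).

Fixpoint lsum {M : Type} (g : M -> R) (l : list M) : R :=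
  match l with nil => 0 | a :: l' => g a + lsum g l' end.

Lemma lsum_ext {M} (g h : M -> R) l : (forall x, In x l -> g x = h x) -> lsum g l = lsum h l.
Proof. induction l; simpl; intros H; auto. rewrite H, IHl; auto. Qed.

Lemma lsum_plus {M} (g h : M -> R) l : lsum (fun x => g x + h x) l = lsum g l + lsum h l.
Proof. induction l; simpl; lra. Qed.

Lemma lsum_minus {M} (g h : M -> R) l : lsum (fun x => g x - h x) l = lsum g l - lsum h l.
Proof. induction l; simpl; lra. Qed.

Lemma lsum_scal {M} (k : R) (g : M -> R) l : lsum (fun x => k * g x) l = k * lsum g l.
Proof. induction l; simpl; lra. Qed.

Lemma lsum_opp {M} (g : M -> R) l : lsum (fun x => - g x) l = - lsum g l.
Proof. induction l; simpl; lra. Qed.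

Lemma lsum_le {M} (g h : M -> R) l : (forall x, In x l -> g x <= h x) -> lsum g l <= lsum h l.
Proof. induction l; simpl; intros H. lra. pose proof (H a (or_introl eq_refl)).
 assert (lsum g l <= lsum h l) by auto. lra. Qed.

Lemma lsum_nonneg {M} (g : M -> R) l : (forall x, In x l -> 0 <= g x) -> 0 <= lsum g l.
Proof. intros H. replace 0 with (lsum (fun _ : M => 0) l). apply lsum_le; auto.
 clear H; induction l; simpl; lra. Qed.

Lemma lsum_each {M} (g : M -> R) l y : (forall x, In x l -> 0 <= g x) -> In y l -> g y <= lsum g l.
Proof. induction l; simpl; intros H Hy. contradiction.
 destruct Hy as [<-|Hy].
 - assert (0 <= lsum g l) by (apply lsum_nonneg; auto). lra.
 - pose proof (H a (or_introl eq_refl)). assert (g y <= lsum g l) by auto. lra. Qed.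

Lemma lsum_abs {M} (g : M -> R) l : Rabs (lsum g l) <= lsum (fun x => Rabs (g x)) l.
Proof. induction l; simpl. rewrite Rabs_R0; lra.
 eapply Rle_trans. apply Rabs_triang. lra. Qed.

Lemma lsum_zero {M} (g : M -> R) l : (forall x, In x l -> g x = 0) -> lsum g l = 0.
Proof. induction l; simpl; intros H; auto. rewrite H, IHl; auto. lra. Qed.

Lemma lsum_single {M} (g : M -> R) l p : NoDup l -> In p l ->
  (forall x, In x l -> x <> p -> g x = 0) -> lsum g l = g p.
Proof. induction l; simpl; intros Hn Hp H. contradiction.
 inversion Hn; subst. destruct Hp as [<-|Hp].
 - rewrite lsum_zero. lra. intros x Hx. apply H; auto. intros ->; contradiction.
 - rewrite H; auto. rewrite IHl; auto. lra. intros ->; contradiction. Qed.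

Definition lmin {M} (g : M -> R) (l : list M) : R :=
  fold_right (fun x acc => Rmin (g x) acc) 1 l.

Lemma lmin_pos {M} (g : M -> R) l : (forall x, In x l -> 0 < g x) -> 0 < lmin g l.
Proof. induction l; simpl; intros H. lra. apply Rmin_glb_lt; auto. Qed.

Lemma lmin_le {M} (g : M -> R) l x : In x l -> lmin g l <= g x.
Proof. induction l; simpl; intros H. contradiction. destruct H as [<-|H].
 apply Rmin_l. eapply Rle_trans. apply Rmin_r. auto. Qed.

Lemma Rmax_lip a b a' b' k : Rabs (a - a') <= k -> Rabs (b - b') <= k ->
  Rabs (Rmax a b - Rmax a' b') <= k.
Proof. unfold Rmax; destruct (Rle_dec a b); destruct (Rle_dec a' b');
 intros H1 H2; unfold Rabs in *; repeat destruct Rcase_abs; lra. Qed.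

Lemma Rmax0_ge x t : 0 < t -> t <= Rmax 0 x -> t <= x.
Proof. unfold Rmax; destruct (Rle_dec 0 x); lra. Qed.

Lemma NoDup_map_inj {A B} (f : A -> B) l a b : NoDup (map f l) -> In a l -> In b l -> f a = f b -> a = b.
Proof. induction l; simpl; intros Hn Ha Hb He. contradiction.
 inversion Hn; subst. destruct Ha as [<-|Ha]; destruct Hb as [<-|Hb]; auto.
 - exfalso. apply H1. rewrite He. apply in_map; auto.
 - exfalso. apply H1. rewrite <- He. apply in_map; auto. Qed.

Definition tent {M} (d : M -> M -> R) (rho : R) (q y : M) := Rmax 0 (rho - d y q).

Fixpoint phiL {M} (d : M -> M -> R) rho (c : M -> R) (l : list M) (y : M) : R :=
  match l with nil => 0 | q :: l' =>
    if Rlt_dec 0 (c q) then Rmax (tent d rho q y) (phiL d rho c l' y) else phiL d rho c l' y end.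


Lemma tent_lip {M} (d : M -> M -> R) rho q y z : is_metric d ->
  Rabs (tent d rho q y - tent d rho q z) <= d y z.
Proof. intros [Hp [Hz [Hs Ht]]]. unfold tent. apply Rmax_lip.
 rewrite Rminus_0_r, Rabs_R0; auto.
 pose proof (Ht z y q). pose proof (Ht y z q). rewrite (Hs z y) in *.
 unfold Rabs; destruct Rcase_abs; lra. Qed.

Lemma phiL_lip {M} (d : M -> M -> R) rho c l y z : is_metric d ->
  Rabs (phiL d rho c l y - phiL d rho c l z) <= d y z.
Proof. intros Hm. induction l; simpl. rewrite Rminus_0_r, Rabs_R0. apply Hm.
 destruct Rlt_dec; auto. apply Rmax_lip; auto. apply tent_lip; auto. Qed.

Lemma tent_nonneg {M} (d : M -> M -> R) rho q y : 0 <= tent d rho q y.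
Proof. apply Rmax_l. Qed.

Lemma phiL_nonneg {M} (d : M -> M -> R) rho c l y : 0 <= phiL d rho c l y.
Proof. induction l; simpl. lra. destruct Rlt_dec; auto.
 eapply Rle_trans; [apply IHl| apply Rmax_r]. Qed.

Lemma phiL_ge {M} (d : M -> M -> R) rho c l y q : In q l -> 0 < c q ->
  tent d rho q y <= phiL d rho c l y.
Proof. induction l; simpl; intros Hq Hc. contradiction.
 destruct Hq as [<-|Hq].
 - destruct Rlt_dec; [apply Rmax_l|lra].
 - destruct Rlt_dec; auto. eapply Rle_trans; [apply IHl; auto| apply Rmax_r]. Qed.

Lemma phiL_wit {M} (d : M -> M -> R) rho c l y t : 0 < t -> t <= phiL d rho c l y ->
  exists q, In q l /\ 0 < c q /\ t <= tent d rho q y.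
Proof. induction l; simpl; intros Ht H. lra.
 destruct Rlt_dec.
 - unfold Rmax at 1 in H. destruct Rle_dec.
   + destruct IHl as [q [? ?]]; auto. exists q; auto.
   + exists a; auto.
 - destruct IHl as [q [? ?]]; auto. exists q; auto. Qed.

Lemma phiL_zero {M} (d : M -> M -> R) rho c l y :
  (forall q, In q l -> 0 < c q -> tent d rho q y = 0) -> phiL d rho c l y = 0.
Proof. induction l; simpl; intros H; auto. destruct Rlt_dec.
 - rewrite H, IHl; auto. unfold Rmax; destruct Rle_dec; lra.
 - auto. Qed.

Lemma phiL_le {M} (d : M -> M -> R) rho c l y : is_metric d -> 0 <= rho -> phiL d rho c l y <= rho.
Proof. intros [Hp _] Hr. induction l; simpl. lra. destruct Rlt_dec; auto.
 pose proof (Hp y a). apply Rmax_lub; auto. unfold tent; apply Rmax_lub; lra. Qed.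

Lemma tent_far {M} (d : M -> M -> R) rho q y : rho <= d y q -> tent d rho q y = 0.
Proof. intros H. unfold tent, Rmax. destruct Rle_dec; lra. Qed.

Lemma tent_near {M} (d : M -> M -> R) rho q y : d y q <= rho -> tent d rho q y = rho - d y q.
Proof. intros H. unfold tent, Rmax. destruct Rle_dec; lra. Qed.

Lemma match_pos {M} (d : M -> M -> R) (x0 : M) (P : list M) (c : M -> R) :
  is_metric d -> NoDup P -> ~ In x0 P ->
  (forall p, In p P -> c p <> 0) ->
  (forall p q, In p P -> In q P -> c p = c q -> p = q) ->
  forall eps, 0 < eps -> exists eta, 0 < eta /\
  forall w : M -> M,
   (forall phi, lip0_fun d x0 1 phi -> Rabs (lsum (fun p => c p * (phi (w p) - phi p)) P) <= eta) ->
   forall p, In p P -> 0 < c p -> d (w p) p <= eps.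
Proof.
  intros Hm HnP Hx0 Hc0 Hcd eps Heps.
  pose proof Hm as [Hp [Hz [Hs Ht]]].
  set (Q := x0 :: P).
  set (rho := lmin (fun x => lmin (fun y => if eqdec x y then 1 else d x y) Q) Q / 3).
  assert (Hrho : 0 < rho).
  { unfold rho. apply Rdiv_lt_0_compat; [|lra]. apply lmin_pos; intros x Hx. apply lmin_pos; intros y Hy.
    destruct (eqdec x y); [lra|]. destruct (Hp x y) as [H|H]; auto. exfalso; apply n. apply Hz; lra. }
  assert (Hsep : forall x y, In x Q -> In y Q -> x <> y -> 3 * rho <= d x y).
  { intros x y Hx Hy Hxy. unfold rho.
    pose proof (lmin_le (fun x => lmin (fun y => if eqdec x y then 1 else d x y) Q) Q x Hx) as H. cbv beta in H.
    pose proof (lmin_le (fun y => if eqdec x y then 1 else d x y) Q y Hy) as H0. cbv beta in H0.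
    destruct (eqdec x y); [contradiction|]. lra. }
  assert (HsepP : forall x y, In x P -> In y P -> x <> y -> 3 * rho <= d x y).
  { intros; apply Hsep; simpl; auto. }
  assert (Hsep0 : forall y, In y P -> 3 * rho <= d x0 y).
  { intros y Hy; apply Hsep; simpl; auto. intros <-; contradiction. }
  set (cm := lmin (fun p => Rabs (c p)) P).
  assert (Hcm : 0 < cm) by (apply lmin_pos; intros; apply Rabs_pos_lt; auto).
  assert (Hcm_le : forall p, In p P -> cm <= Rabs (c p)) by (intros; apply (lmin_le (fun p => Rabs (c p))); auto).
  set (gm := lmin (fun p => lmin (fun q => if eqdec p q then 1 else Rabs (c p - c q)) P) P).
  assert (Hgm : 0 < gm).
  { apply lmin_pos; intros x Hx. apply lmin_pos; intros y Hy.
    destruct (eqdec x y); [lra|]. apply Rabs_pos_lt. intros H. apply n, Hcd; auto; lra. }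
  assert (Hgm_le : forall x y, In x P -> In y P -> x <> y -> gm <= Rabs (c x - c y)).
  { intros x y Hx Hy Hxy. unfold gm.
    pose proof (lmin_le (fun p => lmin (fun q => if eqdec p q then 1 else Rabs (c p - c q)) P) P x Hx) as H. cbv beta in H.
    pose proof (lmin_le (fun q => if eqdec x q then 1 else Rabs (c x - c q)) P y Hy) as H0. cbv beta in H0.
    destruct (eqdec x y); [contradiction|]. lra. }
  set (S := lsum (fun p => Rabs (c p)) P).
  assert (HS : 0 <= S) by (apply lsum_nonneg; intros; apply Rabs_pos).
  set (g0 := Rmin gm cm).
  assert (Hg0 : 0 < g0) by (apply Rmin_glb_lt; auto).
  assert (Hg0a : g0 <= gm) by apply Rmin_l.
  assert (Hg0b : g0 <= cm) by apply Rmin_r.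
  set (kap := Rmin (Rmin (rho/2) eps) (rho*g0/(2*cm+S+1))).
  assert (Hk0 : 0 < kap).
  { apply Rmin_glb_lt; [apply Rmin_glb_lt; lra|]. apply Rdiv_lt_0_compat; [apply Rmult_lt_0_compat|]; lra. }
  assert (Hk1 : kap <= rho/2) by (eapply Rle_trans; [apply Rmin_l|apply Rmin_l]).
  assert (Hk2 : kap <= eps) by (eapply Rle_trans; [apply Rmin_l|apply Rmin_r]).
  assert (Hk3 : kap * (2*cm+S+1) <= rho * g0).
  { assert (H : kap <= rho*g0/(2*cm+S+1)) by apply Rmin_r.
    apply (Rmult_le_compat_r (2*cm+S+1)) in H; [|lra]. unfold Rdiv in H.
    rewrite Rmult_assoc, Rinv_l in H by lra. lra. }
  exists (cm * kap). split; [apply Rmult_lt_0_compat; auto|].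
  intros w H.
  set (phi := phiL d rho c P).
  assert (Hphi0 : phi x0 = 0).
  { apply phiL_zero. intros q Hq _. apply tent_far. pose proof (Hsep0 q Hq). lra. }
  assert (Hphil : lip0_fun d x0 1 phi).
  { split; auto. intros; rewrite Rmult_1_l; apply phiL_lip; auto. }
  assert (Htself : forall p, tent d rho p p = rho).
  { intros p. rewrite tent_near. replace (d p p) with 0. lra. symmetry; apply Hz; auto.
    replace (d p p) with 0. lra. symmetry; apply Hz; auto. }
  set (pos := fun p => if Rlt_dec 0 (c p) then c p else 0).
  assert (HphiP : forall p, In p P -> c p * phi p = pos p * rho).
  { intros p Hp0. unfold pos. destruct Rlt_dec.
    - f_equal. apply Rle_antisym. apply phiL_le; auto; lra.
      rewrite <- (Htself p) at 1. apply phiL_ge; auto.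
    - replace (phi p) with 0. lra. symmetry. apply phiL_zero. intros q Hq Hcq.
      apply tent_far. assert (q <> p) by (intros ->; lra).
      pose proof (HsepP p q Hp0 Hq (not_eq_sym H0)). lra. }
  set (term := fun p => pos p * rho - c p * phi (w p)).
  assert (Hterm_nn : forall p, In p P -> 0 <= term p).
  { intros p Hp0. unfold term, pos. pose proof (phiL_le d rho c P (w p) Hm (Rlt_le _ _ Hrho)).
    pose proof (phiL_nonneg d rho c P (w p)). fold phi in H0, H1. destruct Rlt_dec.
    - nra.
    - assert (c p < 0) by (pose proof (Hc0 p Hp0); lra). nra. }
  assert (Hterm_sum : lsum term P <= cm * kap).
  { assert (E : lsum term P = - lsum (fun p => c p * (phi (w p) - phi p)) P).
    { rewrite <- lsum_opp. apply lsum_ext. intros p Hp0. unfold term. rewrite <- HphiP; auto. ring. }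
    rewrite E. pose proof (H phi Hphil). pose proof (Rle_abs (- lsum (fun p => c p * (phi (w p) - phi p)) P)).
    rewrite Rabs_Ropp in H1. lra. }
  assert (Hnear : forall p, In p P -> 0 < c p -> exists q, In q P /\ 0 < c q /\ d (w p) q <= kap).
  { intros p Hp0 Hcp. pose proof (lsum_each term P p Hterm_nn Hp0).
    assert (Ht1 : term p = c p * (rho - phi (w p))) by (unfold term, pos; destruct Rlt_dec; [ring|lra]).
    pose proof (Hcm_le p Hp0). rewrite Rabs_right in H1 by lra.
    assert (Hk : rho - phi (w p) <= kap).
    { apply (Rmult_le_reg_l (c p)); auto. nra. }
    destruct (phiL_wit d rho c P (w p) (rho - kap)) as [q [Hq [Hcq Hq2]]]; [lra| fold phi; lra|].
    exists q. split; auto. split; auto. apply Rmax0_ge in Hq2; lra. }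
  set (sel := fun p => epsilon (inhabits x0) (fun q => In q P /\ 0 < c q /\ d (w p) q <= kap)).
  assert (Hsel : forall p, In p P -> 0 < c p -> In (sel p) P /\ 0 < c (sel p) /\ d (w p) (sel p) <= kap).
  { intros p Hp0 Hcp. unfold sel. apply epsilon_spec. apply Hnear; auto. }
  set (G := fun q => lsum (fun p => if Rlt_dec 0 (c p) then (if eqdec (sel p) q then c p else 0) else 0) P).
  assert (HG : forall q, In q P -> 0 < c q -> Rabs (G q - c q) < g0).
  { intros q Hq Hcq.
    assert (Htl : lip0_fun d x0 1 (tent d rho q)).
    { split. apply tent_far. pose proof (Hsep0 q Hq); lra.
      intros; rewrite Rmult_1_l; apply tent_lip; auto. }
    pose proof (H _ Htl) as Hq1.
    assert (E1 : lsum (fun p => c p * tent d rho q p) P = c q * rho).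
    { rewrite (lsum_single _ P q); auto. rewrite Htself; auto.
      intros x Hx Hxq. rewrite tent_far. ring. pose proof (HsepP x q Hx Hq Hxq). lra. }
    assert (E2 : lsum (fun p => c p * (tent d rho q (w p) - tent d rho q p)) P
       = lsum (fun p => c p * tent d rho q (w p)) P - c q * rho).
    { rewrite <- E1, <- lsum_minus. apply lsum_ext; intros; ring. }
    rewrite E2 in Hq1.
    set (g := fun p => if Rlt_dec 0 (c p) then (if eqdec (sel p) q then c p else 0) else 0).
    assert (HGg : G q = lsum g P) by reflexivity.
    assert (Hpt : forall p, In p P -> Rabs (c p * tent d rho q (w p) - rho * g p) <= pos p * kap + term p).
    { intros p Hp0. pose proof (Hterm_nn p Hp0) as Htn. unfold g, pos. destruct Rlt_dec as [Hcp|Hcp].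
      - destruct (Hsel p Hp0 Hcp) as [Hs1 [Hs2 Hs3]].
        destruct (eqdec (sel p) q) as [Eq|Nq].
        + rewrite <- Eq. rewrite tent_near by lra.
          pose proof (Hp (w p) (sel p)) as Hd.
          replace (c p * (rho - d (w p) (sel p)) - rho * c p) with (- (c p * d (w p) (sel p))) by ring.
          rewrite Rabs_Ropp, Rabs_right by nra. nra.
        + rewrite tent_far. rewrite Rmult_0_r, Rmult_0_r, Rminus_0_r, Rabs_R0. nra.
          pose proof (HsepP (sel p) q Hs1 Hq Nq) as Hd1. pose proof (Ht (sel p) (w p) q) as Hd2.
          rewrite (Hs (sel p) (w p)) in Hd2. lra.
      - assert (Hneg : c p < 0) by (pose proof (Hc0 p Hp0); lra).
        unfold term, pos in Htn |- *. destruct Rlt_dec; [lra|].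
        pose proof (phiL_ge d rho c P (w p) q Hq Hcq) as Hge. fold phi in Hge.
        pose proof (tent_nonneg d rho q (w p)).
        rewrite Rmult_0_r, Rminus_0_r, Rabs_left1 by nra. nra. }
    assert (Hb : Rabs (lsum (fun p => c p * tent d rho q (w p)) P - rho * G q) <= kap * S + cm * kap).
    { rewrite HGg. rewrite <- lsum_scal, <- lsum_minus. eapply Rle_trans. apply lsum_abs.
      eapply Rle_trans. apply lsum_le. exact Hpt.
      rewrite lsum_plus.
      assert (lsum (fun p => pos p * kap) P <= kap * S).
      { rewrite (lsum_ext _ (fun p => kap * pos p)) by (intros; ring). rewrite lsum_scal.
        apply Rmult_le_compat_l; [lra|]. apply lsum_le. intros; unfold pos; destruct Rlt_dec;
        [rewrite Rabs_right; lra| apply Rabs_pos]. }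
      lra. }
    assert (Hlt : Rabs (rho * (G q - c q)) < rho * g0).
    { replace (rho * (G q - c q)) with (-(lsum (fun p => c p * tent d rho q (w p)) P - rho * G q)
         + (lsum (fun p => c p * tent d rho q (w p)) P - c q * rho)) by ring.
      eapply Rle_lt_trans. apply Rabs_triang. rewrite Rabs_Ropp. nra. }
    rewrite Rabs_mult, (Rabs_right rho) in Hlt by lra. apply Rmult_lt_reg_l in Hlt; auto. }
  assert (Hsurj : forall q, In q P -> 0 < c q -> exists p, In p P /\ 0 < c p /\ sel p = q).
  { intros q Hq Hcq. destruct (classic (exists p, In p P /\ 0 < c p /\ sel p = q)) as [E|NE]; auto.
    exfalso. assert (G q = 0).
    { apply lsum_zero. intros x Hx. destruct Rlt_dec; auto. destruct eqdec; auto.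
      exfalso; apply NE; exists x; auto. }
    pose proof (HG q Hq Hcq). rewrite H0 in H1. pose proof (Hcm_le q Hq).
    rewrite Rabs_right in H2 by lra. rewrite Rminus_0_l, Rabs_Ropp, Rabs_right in H1 by lra. lra. }
  set (Pp := filter (fun p => if Rlt_dec 0 (c p) then true else false) P).
  assert (HinPp : forall p, In p Pp <-> In p P /\ 0 < c p).
  { intros p. unfold Pp. rewrite filter_In. destruct Rlt_dec; split; intros [? ?]; auto; try discriminate; lra. }
  assert (Hnd : NoDup (map sel Pp)).
  { apply (@NoDup_incl_NoDup _ Pp). apply NoDup_filter; auto. rewrite length_map; lia.
    intros q Hq. apply HinPp in Hq as [Hq Hcq]. destruct (Hsurj q Hq Hcq) as [p [Hp1 [Hp2 Hp3]]].
    rewrite <- Hp3. apply in_map. apply HinPp; auto. }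
  assert (Hinj : forall p p', In p P -> In p' P -> 0 < c p -> 0 < c p' -> sel p = sel p' -> p = p').
  { intros p p' H1 H2 H3 H4 H5. apply (NoDup_map_inj sel Pp); auto; apply HinPp; auto. }
  intros p0 Hp0 Hcp0.
  destruct (Hsurj p0 Hp0 Hcp0) as [p [Hp1 [Hp2 Hp3]]].
  assert (EG : G p0 = c p).
  { unfold G. rewrite (lsum_single _ P p); auto.
    - destruct Rlt_dec; [|lra]. destruct eqdec; [auto|contradiction].
    - intros x Hx Hxp. destruct Rlt_dec; auto. destruct eqdec; auto.
      exfalso; apply Hxp. apply Hinj; auto. congruence. }
  pose proof (HG p0 Hp0 Hcp0) as HG0. rewrite EG in HG0.
  destruct (eqdec p p0) as [<-|Hne].
  - destruct (Hsel p Hp1 Hp2) as [_ [_ Hd]]. rewrite Hp3 in Hd. lra.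
  - pose proof (Hgm_le p p0 Hp1 Hp0 Hne). lra.
Qed.

Lemma match_all {M} (d : M -> M -> R) (x0 : M) (P : list M) (c : M -> R) :
  is_metric d -> NoDup P -> ~ In x0 P ->
  (forall p, In p P -> c p <> 0) ->
  (forall p q, In p P -> In q P -> c p = c q -> p = q) ->
  forall eps, 0 < eps -> exists eta, 0 < eta /\
  forall w : M -> M,
   (forall phi, lip0_fun d x0 1 phi -> Rabs (lsum (fun p => c p * (phi (w p) - phi p)) P) <= eta) ->
   forall p, In p P -> d (w p) p <= eps.
Proof.
  intros Hm HnP Hx0 Hc0 Hcd eps Heps.
  destruct (match_pos d x0 P c Hm HnP Hx0 Hc0 Hcd eps Heps) as [e1 [He1 H1]].
  destruct (match_pos d x0 P (fun p => - c p) Hm HnP Hx0) with (eps := eps) as [e2 [He2 H2]]; auto.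
  { intros p Hp E. apply (Hc0 p Hp). lra. }
  { intros p q Hp Hq E. apply Hcd; auto. lra. }
  exists (Rmin e1 e2). split. apply Rmin_glb_lt; auto.
  intros w H p Hp. destruct (Rlt_dec 0 (c p)).
  - apply H1; auto. intros phi Hphi. eapply Rle_trans. apply H; auto. apply Rmin_l.
  - apply H2; auto. intros phi Hphi.
    rewrite (lsum_ext _ (fun p => - (c p * (phi (w p) - phi p)))) by (intros; ring).
    rewrite lsum_opp, Rabs_Ropp. eapply Rle_trans. apply H; auto. apply Rmin_r.
    pose proof (Hc0 p Hp). lra.
Qed.

Definition coef {M} (l : list (R*M)) (p : M) : R :=
  fold_right (fun q acc => (if eqdec (snd q) p then fst q else 0) + acc) 0 l.

Lemma mol_cons {M} (q : R * M) l phi : molecule (q :: l) phi = fst q * phi (snd q) + molecule l phi.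
Proof. reflexivity. Qed.

Lemma mol_app {M} (l1 l2 : list (R*M)) phi : molecule (l1 ++ l2) phi = molecule l1 phi + molecule l2 phi.
Proof. induction l1. change (molecule nil phi) with 0. simpl; ring. simpl app. rewrite !mol_cons, IHl1. ring. Qed.

Lemma mol_decomp {M} (x0 : M) l P h : NoDup P -> h x0 = 0 ->
  (forall q, In q l -> snd q = x0 \/ In (snd q) P) ->
  molecule l h = lsum (fun p => coef l p * h p) P.
Proof.
  induction l as [|[a y] l IH]; intros HP Hh Hl.
  - unfold molecule; simpl. symmetry; apply lsum_zero; intros; simpl; lra.
  - rewrite mol_cons. simpl fst; simpl snd. rewrite IH; auto.
    2:{ intros q Hq; apply Hl; simpl; auto. }
    rewrite (lsum_ext (fun p => coef ((a, y) :: l) p * h p) (fun p => (if eqdec y p then a else 0) * h p + coef l p * h p))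
      by (intros; unfold coef; simpl; ring).
    rewrite lsum_plus. f_equal.
    destruct (Hl (a,y) (or_introl eq_refl)) as [E|E]; simpl in E.
    + subst. rewrite Hh. rewrite lsum_zero. ring. intros x Hx. destruct eqdec; [subst; rewrite Hh|]; ring.
    + rewrite (lsum_single _ P y); auto. destruct eqdec; [ring|congruence].
      intros x Hx Hxy; destruct eqdec; [congruence|ring].
Qed.

Lemma avoid_int (L : list R) : forall lo hi, lo < hi -> exists x, lo < x < hi /\ ~ In x L.
Proof.
  induction L as [|h L IH]; intros lo hi H.
  - exists ((lo+hi)/2). split; [lra|auto].
  - destruct (Rlt_dec lo h); [destruct (Rlt_dec h hi)|].
    + destruct (IH lo h) as [x [Hx Hn]]; auto. exists x; split; [lra|]. intros [E|E]; [lra|auto].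
    + destruct (IH lo hi) as [x [Hx Hn]]; auto. exists x; split; [lra|]. intros [E|E]; [lra|auto].
    + destruct (IH lo hi) as [x [Hx Hn]]; auto. exists x; split; [lra|]. intros [E|E]; [lra|auto].
Qed.

Lemma perturb {M} (P : list M) (base : M -> R) tau : 0 < tau -> NoDup P ->
  exists e : M -> R, (forall p, Rabs (e p) <= tau) /\
   (forall p, In p P -> base p + e p <> 0) /\
   (forall p q, In p P -> In q P -> base p + e p = base q + e q -> p = q).
Proof.
  intros Htau. induction P as [|a P IH]; intros HnP.
  - exists (fun _ => 0). split; [intros; rewrite Rabs_R0; lra|]. split; intros; contradiction.
  - inversion HnP; subst. destruct IH as [e' [He1 [He2 He3]]]; auto.
    destruct (avoid_int (0 :: map (fun q => base q + e' q) P) (base a) (base a + tau)) as [x [Hx Hnx]]; [lra|].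
    exists (fun y => if eqdec y a then x - base a else e' y).
    assert (Hin : forall p, In p (a :: P) -> p <> a -> In p P).
    { intros p [E|E] Hne; [congruence|auto]. }
    split; [|split].
    + intros p. destruct eqdec; auto. rewrite Rabs_right; lra.
    + intros p Hp. destruct eqdec.
      * replace (base p + (x - base a)) with x by (subst; ring). intros E; apply Hnx; left; auto.
      * apply He2; auto.
    + intros p q Hp Hq E. destruct (eqdec p a) as [Ep|Np]; destruct (eqdec q a) as [Eq|Nq].
      * congruence.
      * exfalso. apply Hnx. right. apply in_map_iff. exists q. split; [|auto].
        subst p. rewrite <- E. ring.
      * exfalso. apply Hnx. right. apply in_map_iff. exists p. split; [|auto].
        subst q. rewrite E. ring.
      * apply He3; auto.
Qed.

Lemma iter_fix {M} (f : M -> M) x0 n : f x0 = x0 -> Nat.iter n f x0 = x0.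
Proof. intros H; induction n; simpl; auto. rewrite IHn; auto. Qed.

Lemma coef_app {M} (l1 l2 : list (R*M)) p : coef (l1 ++ l2) p = coef l1 p + coef l2 p.
Proof. induction l1; simpl. ring. unfold coef in *; simpl. rewrite IHl1. ring. Qed.

Lemma coef_map {M} (e : M -> R) P p : NoDup P -> In p P -> coef (map (fun q => (e q, q)) P) p = e p.
Proof.
  intros HnP Hp. transitivity (lsum (fun q => if eqdec q p then e q else 0) P).
  - clear HnP Hp. induction P; simpl; auto. unfold coef in *; simpl. rewrite IHP. auto.
  - rewrite (lsum_single _ P p); auto. destruct eqdec; congruence.
    intros x _ Hx; destruct eqdec; congruence.
Qed.

Lemma mol_map {M} (e : M -> R) P phi : molecule (map (fun q => (e q, q)) P) phi = lsum (fun p => e p * phi p) P.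
Proof. induction P. reflexivity. cbn [map lsum]. rewrite mol_cons, IHP. reflexivity. Qed.

Lemma joint_rec {M} (d : M -> M -> R) (x0 : M) (f : M -> M) :
  is_metric d -> f x0 = x0 -> R_hatf_interior_nonempty d x0 f ->
  forall F : list M, forall eps, 0 < eps -> forall N : nat, exists n, (N <= n)%nat /\
    forall x, In x F -> d (Nat.iter n f x) x <= eps.
Proof.
  intros Hm Hf0 [mu0 [HF0 [r [Hr Hball]]]] F eps Heps N.
  pose proof Hm as [Hp [Hz [Hs Ht]]].
  destruct (HF0 (r/2)) as [m0 Hm0]; [lra|].
  set (P := filter (fun x => if eqdec x x0 then false else true) (nodup eqdec (F ++ map snd m0))).
  assert (HnP : NoDup P) by (apply NoDup_filter, NoDup_nodup).
  assert (HinP : forall x, In x P <-> In x (F ++ map snd m0) /\ x <> x0).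
  { intros x. unfold P. rewrite filter_In, nodup_In. destruct eqdec; split; intros [? ?]; auto;
    try discriminate; try contradiction. }
  assert (Hx0P : ~ In x0 P) by (intros H; apply HinP in H as [_ H]; auto).
  assert (HF : forall x, In x F -> x = x0 \/ In x P).
  { intros x Hx. destruct (eqdec x x0); auto. right; apply HinP; split; auto; apply in_or_app; auto. }
  assert (Hm0P : forall q, In q m0 -> snd q = x0 \/ In (snd q) P).
  { intros q Hq. destruct (eqdec (snd q) x0); auto. right; apply HinP; split; auto;
    apply in_or_app; right; apply in_map; auto. }
  set (Ds := lsum (fun p => d p x0) P).
  assert (HDs : 0 <= Ds) by (apply lsum_nonneg; auto).
  set (tau := r / (4 * (Ds + 1))).
  assert (Htau : 0 < tau) by (unfold tau; apply Rdiv_lt_0_compat; lra).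
  assert (Htau2 : tau * Ds <= r / 4).
  { assert (tau * (Ds + 1) = r/4) by (unfold tau; field; lra). nra. }
  destruct (perturb P (coef m0) tau Htau HnP) as [e [He1 [He2 He3]]].
  set (nu := m0 ++ map (fun p => (e p, p)) P).
  set (c := fun p => coef m0 p + e p).
  assert (Hcoef : forall p, In p P -> coef nu p = c p).
  { intros p Hp0. unfold nu, c. rewrite coef_app, coef_map; auto. }
  assert (Hnupts : forall q, In q nu -> snd q = x0 \/ In (snd q) P).
  { intros q Hq. unfold nu in Hq. apply in_app_or in Hq as [Hq|Hq]; auto.
    apply in_map_iff in Hq as [p [<- Hp0]]. simpl; auto. }
  assert (Hmol : forall h, h x0 = 0 -> molecule nu h = lsum (fun p => c p * h p) P).
  { intros h Hh. rewrite (mol_decomp x0 nu P h); auto. apply lsum_ext; intros; rewrite Hcoef; auto. }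
  assert (HnuR : in_R_hatf d x0 f (molecule nu)).
  { apply Hball.
    - intros eps' He'. exists nu. intros L phi HL _. unfold Rminus; rewrite Rplus_opp_r, Rabs_R0. nra.
    - exists (3 * r / 4). split; [lra|]. intros L phi HL [Hphi0 Hphi].
      assert (Hd : Rabs (molecule nu phi - molecule m0 phi) <= r/4 * L).
      { unfold nu. rewrite mol_app, mol_map.
        replace (_ + _ - _) with (lsum (fun p => e p * phi p) P) by ring.
        eapply Rle_trans. apply lsum_abs. eapply Rle_trans.
        apply (lsum_le _ (fun p => (tau * L) * d p x0)). intros p _. rewrite Rabs_mult.
        pose proof (Hphi p x0) as H1. rewrite Hphi0, Rminus_0_r in H1.
        pose proof (He1 p). pose proof (Rabs_pos (e p)). pose proof (Rabs_pos (phi p)). nra.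
        rewrite lsum_scal. fold Ds. nra. }
      pose proof (Hm0 L phi HL (conj Hphi0 Hphi)) as H0.
      replace (molecule nu phi - mu0 phi) with ((molecule nu phi - molecule m0 phi) + - (mu0 phi - molecule m0 phi)) by ring.
      eapply Rle_trans; [apply Rabs_triang|]. rewrite Rabs_Ropp. lra. }
  assert (Hnz : forall p, In p P -> c p <> 0) by (intros p Hp0; apply He2; auto).
  assert (Hdi : forall p q, In p P -> In q P -> c p = c q -> p = q) by (intros p q Hp0 Hq E; apply He3; auto).
  destruct (match_all d x0 P c Hm HnP Hx0P Hnz Hdi eps Heps) as [eta [Heta Hmatch]].
  destruct HnuR as [_ HnuR]. destruct (HnuR eta Heta N) as [n [Hn Hfd]].
  exists n. split; auto.
  assert (Hw : forall x, In x P -> d (Nat.iter n f x) x <= eps).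
  { apply Hmatch. intros phi [Hphi0 Hphi].
    pose proof (Hfd 1 phi Rle_0_1 (conj Hphi0 Hphi)) as H1. rewrite Rmult_1_r in H1.
    unfold hatf_iter in H1.
    rewrite (Hmol (fun x => phi (Nat.iter n f x))) in H1 by (rewrite iter_fix; auto).
    rewrite (Hmol phi) in H1 by auto.
    rewrite (lsum_ext (fun p => c p * (phi (Nat.iter n f p) - phi p)) (fun p => c p * phi (Nat.iter n f p) - c p * phi p))
      by (intros; ring).
    rewrite lsum_minus. exact H1. }
  intros x Hx. destruct (HF x Hx) as [->|Hx'].
  - rewrite iter_fix; auto. replace (d x0 x0) with 0 by (symmetry; apply Hz; auto). lra.
  - apply Hw; auto.
Qed.

Lemma tri3 a b c : Rabs (a + b - c) <= Rabs a + Rabs b + Rabs c.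
Proof. unfold Rabs; repeat destruct Rcase_abs; lra. Qed.

Lemma mol_diff {M} (l : list (R*M)) (phi : M -> R) (g : M -> M) K :
  (forall q, In q l -> Rabs (phi (g (snd q)) - phi (snd q)) <= K) ->
  Rabs (molecule l (fun x => phi (g x)) - molecule l phi) <= lsum (fun q => Rabs (fst q)) l * K.
Proof.
  induction l as [|q l IH]; intros H.
  - change (molecule nil (fun x => phi (g x))) with 0. change (molecule nil phi) with 0.
    cbn [lsum]. rewrite Rminus_0_r, Rabs_R0. lra.
  - rewrite !mol_cons. cbv beta. cbn [lsum].
    replace (fst q * phi (g (snd q)) + molecule l (fun x => phi (g x)) - (fst q * phi (snd q) + molecule l phi))
      with (fst q * (phi (g (snd q)) - phi (snd q)) + (molecule l (fun x => phi (g x)) - molecule l phi)) by ring.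
    eapply Rle_trans. apply Rabs_triang. rewrite Rabs_mult.
    pose proof (H q (or_introl eq_refl)). pose proof (IH (fun q' Hq' => H q' (or_intror Hq'))).
    pose proof (Rabs_pos (fst q)). nra.
Qed.

Lemma approx_step {M} (d : M -> M -> R) x0 (f : M -> M) C (mu : functional M) l e1 e2 n :
  f x0 = x0 -> 0 <= C -> lipschitz_map d C (Nat.iter n f) -> 0 <= e1 ->
  fdist_le d x0 mu (molecule l) e1 ->
  (forall q, In q l -> d (Nat.iter n f (snd q)) (snd q) <= e2) ->
  fdist_le d x0 (hatf_iter f n mu) mu (e1 * C + lsum (fun q => Rabs (fst q)) l * e2 + e1).
Proof.
  intros Hf0 HC Hlip He1 Hl Hq L phi HL [Hphi0 Hphi].
  unfold hatf_iter.
  set (psi := fun x => phi (Nat.iter n f x)).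
  assert (Hpsi : lip0_fun d x0 (L * C) psi).
  { split. unfold psi; rewrite iter_fix; auto. intros x y. unfold psi. eapply Rle_trans. apply Hphi.
    pose proof (Hlip x y). rewrite Rmult_assoc. apply Rmult_le_compat_l; auto. }
  pose proof (Hl (L*C) psi (Rmult_le_pos _ _ HL HC) Hpsi) as H1.
  pose proof (Hl L phi HL (conj Hphi0 Hphi)) as H3.
  assert (H2 : Rabs (molecule l psi - molecule l phi) <= lsum (fun q => Rabs (fst q)) l * (L * e2)).
  { unfold psi; apply (mol_diff l phi (Nat.iter n f)). intros q Hq0. eapply Rle_trans. apply Hphi. apply Rmult_le_compat_l; auto. }
  replace (mu psi - mu phi) with ((mu psi - molecule l psi) + (molecule l psi - molecule l phi) - (mu phi - molecule l phi)) by ring.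
  eapply Rle_trans. apply tri3.
  pose proof (lsum_nonneg (fun q => Rabs (fst q)) l (fun q _ => Rabs_pos _)).
  lra.
Qed.

Lemma fdist_mono {M} (d : M -> M -> R) x0 m n b b' : b <= b' -> fdist_le d x0 m n b -> fdist_le d x0 m n b'.
Proof. intros Hb H L phi HL Hphi. specialize (H L phi HL Hphi). eapply Rle_trans. exact H. apply Rmult_le_compat_r; assumption. Qed.

Theorem corollary3p8 (M : Type) (d : M -> M -> R) (x0 : M) (f : M -> M)
  (C : R)
  (Hmet : is_metric d) (Hcomp : complete_metric d)
  (Hflip : exists L, lipschitz_map d L f) (Hf0 : f x0 = x0)
  (Hint : R_hatf_interior_nonempty d x0 f)
  (HC : 0 < C) (Hpow : forall n : nat, lipschitz_map d C (Nat.iter (S n) f)) :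
  (forall mu, in_FM d x0 mu -> in_R_hatf d x0 f mu) /\
  (separable_metric d -> hatf_rigid d x0 f).
Proof.
  pose proof Hmet as [Hp [Hz [Hs Ht]]].
  assert (Hlipn : forall n, (1 <= n)%nat -> lipschitz_map d C (Nat.iter n f)).
  { intros [|k] Hk; [lia|apply Hpow]. }
  assert (Fin : forall mu eps, in_FM d x0 mu -> 0 < eps -> exists (l : list (R * M)) e2, 0 < e2 /\
     forall n, (1 <= n)%nat -> (forall q, In q l -> d (Nat.iter n f (snd q)) (snd q) <= e2) ->
     fdist_le d x0 (hatf_iter f n mu) mu eps).
  { intros mu eps Hmu Heps.
    set (e1 := eps / (2 * (C + 1))).
    assert (He1 : 0 < e1) by (unfold e1; apply Rdiv_lt_0_compat; lra).
    assert (He1b : e1 * (C + 1) = eps / 2) by (unfold e1; field; lra).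
    destruct (Hmu e1 He1) as [l Hl].
    set (A := lsum (fun q => Rabs (fst q)) l).
    assert (HA : 0 <= A) by (apply lsum_nonneg; intros; apply Rabs_pos).
    set (e2 := eps / (2 * (A + 1))).
    assert (He2 : 0 < e2) by (unfold e2; apply Rdiv_lt_0_compat; lra).
    assert (He2b : e2 * (A + 1) = eps / 2) by (unfold e2; field; lra).
    exists l, e2. split; auto. intros n Hn Hq.
    eapply fdist_mono; [|apply (approx_step d x0 f C mu l e1 e2 n); auto; lra].
    fold A. nra. }
  split.
  - intros mu Hmu. split; auto. intros eps Heps N.
    destruct (Fin mu eps Hmu Heps) as [l [e2 [He2 Hfin]]].
    destruct (joint_rec d x0 f Hmet Hf0 Hint (map snd l) e2 He2 (S N)) as [n [Hn Hx]].
    exists n. split; [lia|]. apply Hfin; [lia|].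
    intros q Hq. apply Hx. apply in_map; auto.
  - intros [s Hsd].
    assert (Hg : forall j N : nat, {n : nat | (N <= n)%nat /\
       forall i, (i <= j)%nat -> d (Nat.iter n f (s i)) (s i) <= / INR (S j)}).
    { intros j N. apply constructive_indefinite_description.
      assert (Hpos : 0 < / INR (S j)) by (apply Rinv_0_lt_compat, lt_0_INR; lia).
      destruct (joint_rec d x0 f Hmet Hf0 Hint (map s (seq 0 (S j))) _ Hpos N) as [n [Hn Hx]].
      exists n. split; auto. intros i Hi. apply Hx. apply in_map. apply in_seq. lia. }
    set (nj := fix nj (j : nat) : nat := match j with
                 | O => proj1_sig (Hg O 1%nat)
                 | S j' => proj1_sig (Hg (S j') (S (nj j'))) end).
    assert (Hnj1 : forall j, (S (nj j) <= nj (S j))%nat).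
    { intros j. exact (proj1 (proj2_sig (Hg (S j) (S (nj j))))). }
    assert (Hnj0 : forall j, (1 <= nj j)%nat).
    { intros [|j]. exact (proj1 (proj2_sig (Hg 0%nat 1%nat))).
      pose proof (Hnj1 j). lia. }
    assert (Hnjr : forall j i, (i <= j)%nat -> d (Nat.iter (nj j) f (s i)) (s i) <= / INR (S j)).
    { intros [|j] i Hi.
      - exact (proj2 (proj2_sig (Hg 0%nat 1%nat)) i Hi).
      - exact (proj2 (proj2_sig (Hg (S j) (S (nj j)))) i Hi). }
    exists nj. split; [intros j; pose proof (Hnj1 j); lia|].
    intros mu Hmu eps Heps.
    destruct (Fin mu eps Hmu Heps) as [l [e2 [He2 Hfin]]].
    assert (Hpt : forall y, exists J, forall j, (J <= j)%nat -> d (Nat.iter (nj j) f y) y <= e2).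
    { intros y. set (dl := e2 / (C + 2)).
      assert (Hdl : 0 < dl) by (unfold dl; apply Rdiv_lt_0_compat; lra).
      assert (Hdl2 : dl * (C + 2) = e2) by (unfold dl; field; lra).
      destruct (Hsd y dl Hdl) as [i Hi].
      destruct (archimed_cor1 dl Hdl) as [J0 [HJ0 HJ0p]].
      exists (Nat.max i J0). intros j Hj.
      pose proof (Hnjr j i ltac:(lia)) as H1.
      assert (H2 : / INR (S j) <= / INR J0).
      { apply Rinv_le_contravar. apply lt_0_INR; lia. apply le_INR; lia. }
      pose proof (Hlipn (nj j) (Hnj0 j) y (s i)) as H3.
      pose proof (Ht (Nat.iter (nj j) f y) (Nat.iter (nj j) f (s i)) y).
      pose proof (Ht (Nat.iter (nj j) f (s i)) (s i) y).
      rewrite (Hs (s i) y) in *. nra. }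
    assert (Hlist : forall l' : list (R * M), exists J, forall j, (J <= j)%nat ->
              forall q, In q l' -> d (Nat.iter (nj j) f (snd q)) (snd q) <= e2).
    { induction l' as [|q l' IH].
      - exists 0%nat. intros; contradiction.
      - destruct IH as [J1 HJ1]. destruct (Hpt (snd q)) as [J2 HJ2].
        exists (Nat.max J1 J2). intros j Hj q' [<-|Hq'].
        + apply HJ2; lia.
        + apply HJ1; auto; lia. }
    destruct (Hlist l) as [J HJ]. exists J. intros j Hj.
    apply Hfin; auto.
Qed.
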